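(* Let $\mathbf v\in\mathbb Z^4$ be nonzero and suppose the orbit $\mathcal A[\mathbf v]=\{\mathbf U\mathbf v:\mathbf U\in\mathcal A\}$ contains a root quadruple $\mathbf a$. Then: (1) $\mathbf a$ is the unique reduced quadruple in $\mathcal A[\mathbf v]$; (2) all values $L(\mathbf x)$, $\mathbf x\in\mathcal A[\mathbf v]$, are nonzero and have the same sign, and if this sign is positive, then the general reduction algorithm started from any $\mathbf x\in\mathcal A[\mathbf v]$ applies only $\mathbf S_4$ (to the quadruple ordered increasingly) until the root quadruple is reached.
   Context: $\mathbf S_1,\dots,\mathbf S_4$ are the $4\times4$ integer matrices acting on column vectors $(a_1,a_2,a_3,a_4)^T$ by replacing the $i$-th coordinate $a_i$ with $2\sum_{j\ne i}a_j-a_i$, other coordinates fixed. The Apollonian group $\mathcal A$ is the subgroup of $GL(4,\mathbb Z)$ generated by $\mathbf S_1,\dots,\mathbf S_4$. For $\mathbf v=(a,b,c,d)$, $|\mathbf v|=|a|+|b|+|c|+|d|$ and $L(\mathbf v)=a+b+c+d$. General reduction algorithm: order the quadruple increasingly, then apply the first $\mathbf S_i$ ($i=1,2,3,4$ in order) that strictly decreases $|\mathbf v|$, and repeat; halt when no $\mathbf S_i$ strictly decreases $|\mathbf v|$. A quadruple is reduced if no $\mathbf S_i$ strictly decreases $|\mathbf v|$. A reduced quadruple $\mathbf a$, ordered as $a\le b\le c\le d$, with $L(\mathbf a)\ge0$ is a root quadruple if $a+b+c\ge d>0$; a reduced $\mathbf a$ with $L(\mathbf a)<0$ is a root quadruple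 if $(-d,-c,-b,-a)$ is one. *)

(* Defs.v *)
From HB Require Import structures.
From mathcomp Require Import all_boot all_order all_algebra.
Set Implicit Arguments. Unset Strict Implicit. Unset Printing Implicit Defensive.
Import Order.TTheory GRing.Theory Num.Theory.
Local Open Scope ring_scope.

Notation quad := ('cV[int]_4).

(* S_i (i : 'I_4; the paper's S_1..S_4 are i = 0..3): replaces a_i by
   2 * sum_{j <> i} a_j - a_i, other coordinates fixed. *)
Definition Smx (i : 'I_4) : 'M[int]_4 :=
  \matrix_(r < 4, c < 4)
    (if r == i then (if c == i then -1 else 2) else (if r == c then 1 else 0)).

Inductive in_A : 'M[int]_4 -> Prop :=
  | in_A_gen (i : 'I_4) : in_A (Smx i)
  | in_A_one : in_A 1%:M
  | in_A_mul (U V : 'M[int]_4) : in_A U -> in_A V -> in_A (U *m V)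
  | in_A_inv (U : 'M[int]_4) : in_A U -> in_A (invmx U).

Definition in_Aorbit (v x : quad) : Prop := exists U, in_A U /\ x = U *m v.

Definition qnorm (v : quad) : int := \sum_(i < 4) `|v i 0|.
Definition qL (v : quad) : int := \sum_(i < 4) v i 0.

Definition sortq (v : quad) : quad :=
  \col_(i < 4) nth 0 (sort <=%R [seq v j 0 | j <- enum 'I_4]) i.

Definition decreases (v : quad) (i : 'I_4) : bool := qnorm (Smx i *m v) < qnorm v.

Definition reduced (v : quad) : Prop := forall i : 'I_4, ~~ decreases v i.

Definition i0 : 'I_4 := @Ordinal 4 0 isT.
Definition i1 : 'I_4 := @Ordinal 4 1 isT.
Definition i2 : 'I_4 := @Ordinal 4 2 isT.
Definition i3 : 'I_4 := @Ordinal 4 3 isT.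

Definition root_pos (v : quad) : Prop :=
  let w := sortq v in
  reduced v /\ 0 <= qL v /\ w i3 0 <= w i0 0 + w i1 0 + w i2 0 /\ 0 < w i3 0.

Definition quad_of (a b c d : int) : quad :=
  \col_(i < 4) nth 0 [:: a; b; c; d] i.

Definition is_root (v : quad) : Prop :=
  if 0 <= qL v then root_pos v
  else reduced v /\
       (let w := sortq v in
        root_pos (quad_of (- w i3 0) (- w i2 0) (- w i1 0) (- w i0 0))).

Definition red_step (v : quad) : option ('I_4 * quad) :=
  let w := sortq v in
  let k := find (decreases w) (enum 'I_4) in
  if (k < 4)%N then Some (inord k, Smx (inord k) *m w) else None.

(* red_run x s r : the algorithm started from x applies the S-indices s
   in this order and halts with the (ordered) quadruple r. *)
Inductive red_run : quad -> seq 'I_4 -> quad -> Prop :=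
  | red_halt (v : quad) : red_step v = None -> red_run v [::] (sortq v)
  | red_move (v v' r : quad) (i : 'I_4) (s : seq 'I_4) :
      red_step v = Some (i, v') -> red_run v' s r -> red_run v (i :: s) r.

(* Main.v *)
Require Import Defs.
From HB Require Import structures.
From mathcomp Require Import all_boot all_order all_algebra all_fingroup.
From mathcomp Require Import zify ring lra.
Import Order.TTheory GRing.Theory Num.Theory.
Local Open Scope ring_scope.

Lemma eqoP (k j : 'I_4) : reflect (k = j) (k == j).
Proof. exact: eqP. Qed.

Definition tq (x : quad) (k : 'I_4) : int := qL x - 2 * x k 0.

Lemma sum_upd (j : 'I_4) (f g : 'I_4 -> int) :
  (forall k, k != j -> f k = g k) ->
  \sum_k f k = \sum_k g k + (f j - g j).
Proof.
move=> H; rewrite (bigD1 j) //= [in RHS](bigD1 j) //=.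
rewrite (eq_bigr g); last by move=> k /H.
ring.
Qed.

Lemma SmxE j (x : quad) k :
  (Smx j *m x) k 0 = if k == j then x j 0 + 2 * tq x j else x k 0.
Proof.
rewrite mxE /Smx; under eq_bigr do rewrite mxE.
have [kj|nkj] := eqVneq k j; first subst k.
  rewrite /tq /qL (bigD1 j) //= [X in _ = _ + 2 * (X - _)](bigD1 j) //= eqxx.
  rewrite (eq_bigr (fun c => 2 * x c 0)); last first.
    by move=> c cj; rewrite (negbTE cj).
  rewrite -mulr_sumr; ring.
rewrite (bigD1 k) //= eqxx big1 ?addr0 ?mul1r //.
move=> c ck; rewrite eq_sym (negbTE ck); exact: mul0r.
Qed.

Lemma qL_S j x : qL (Smx j *m x) = qL x + 2 * tq x j.
Proof.
rewrite /qL (@sum_upd j _ (fun k => x k 0)); last first.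
  by move=> k kj; rewrite SmxE (negbTE kj).
by rewrite SmxE eqxx; congr (_ + _); ring.
Qed.

Lemma qnorm_S j x : qnorm (Smx j *m x) = qnorm x + (`|x j 0 + 2 * tq x j| - `|x j 0|).
Proof.
rewrite /qnorm (@sum_upd j _ (fun k => `|x k 0|)); last first.
  by move=> k kj; rewrite SmxE (negbTE kj).
by rewrite SmxE eqxx.
Qed.

Lemma tt_S j x k : tq (Smx j *m x) k = if k == j then - tq x j else tq x k + 2 * tq x j.
Proof.
rewrite {1}/tq qL_S SmxE; case: ifP => [/eqoP kj|_]; first subst k; rewrite /tq; ring.
Qed.

Lemma dec_S j x : decreases x j = (`|x j 0 + 2 * tq x j| < `|x j 0|).
Proof.
rewrite /decreases qnorm_S.
by rewrite gtrDl subr_lt0.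
Qed.

Lemma SS j (x : quad) : Smx j *m (Smx j *m x) = x.
Proof.
apply/matrixP => k l; rewrite (ord1 l) SmxE tt_S !SmxE.
case: ifP => [/eqoP kj|kj]; first by subst k; rewrite eqxx; ring.
by rewrite kj.
Qed.

Lemma S_fix j (x : quad) : tq x j = 0 -> Smx j *m x = x.
Proof.
move=> h; apply/matrixP => k l; rewrite (ord1 l) SmxE h.
case: ifP => [/eqoP kj|//]; subst k; ring.
Qed.

Lemma SmxSmx j : Smx j *m Smx j = 1%:M.
Proof.
apply/matrixP => r c.
have := congr1 (fun M : quad => M r 0) (SS j (delta_mx c 0)).
rewrite mulmxA -colE !mxE => ->.
by rewrite andbT.
Qed.

Definition Root (x : quad) := (forall k, 0 <= tq x k) /\ 0 < qL x.
Definition Kp (i : 'I_4) (x : quad) :=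
  [/\ tq x i < 0, (forall k, k != i -> 0 <= tq x k + tq x i) & 0 < qL x + tq x i].

Lemma dec_true (x : quad) j : 0 < qL x + tq x j -> tq x j < 0 -> decreases x j.
Proof.
rewrite dec_S /tq => h1 h2; lia.
Qed.

Lemma dec_false (x : quad) j : 0 < qL x + tq x j -> 0 <= tq x j -> ~~ decreases x j.
Proof.
rewrite dec_S /tq => h1 h2; lia.
Qed.

Lemma Kp_L {i x} : Kp i x -> 0 < qL x.
Proof. case=> h1 _ h3; lia. Qed.

Lemma Kp_pos {i x k} : Kp i x -> k != i -> 0 < tq x k.
Proof. case=> h1 h2 _ /h2; lia. Qed.

Lemma Kp_dec {i x} : Kp i x -> decreases x i.
Proof. case=> h1 _ h3; exact: dec_true. Qed.

Lemma Kp_ndec i x k : Kp i x -> k != i -> ~~ decreases x k.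
Proof.
move=> K ki; have := Kp_pos K ki; have := Kp_L K => h1 h2.
apply: dec_false; lia.
Qed.

Lemma Root_ndec x k : Root x -> ~~ decreases x k.
Proof.
case=> h1 h2; have := h1 k => h3; apply: dec_false; lia.
Qed.

Lemma Kp_prop {i j x} : Kp i x -> j != i -> Kp j (Smx j *m x).
Proof.
move=> K ji; have := Kp_pos K ji; have := Kp_L K; case: K => h1 h2 h3 h4 h5.
split.
- by rewrite tt_S eqxx; lia.
- move=> k kj; rewrite !tt_S eqxx (negbTE kj).
  have [ki|ki] := eqVneq k i.
    by subst k; have := h2 _ ji; lia.
  have := Kp_pos (And3 h1 h2 h3) ki; lia.
- by rewrite qL_S tt_S eqxx; lia.
Qed.

Lemma Root_prop j x : Root x -> 0 < tq x j -> Kp j (Smx j *m x).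
Proof.
case=> h1 h2 h3; split.
- by rewrite tt_S eqxx; lia.
- move=> k kj; rewrite !tt_S eqxx (negbTE kj); have := h1 k; lia.
- by rewrite qL_S tt_S eqxx; lia.
Qed.

Inductive tree (r : quad) : quad -> Prop :=
  | tr0 : tree r r
  | trS i x : tree r x -> Kp i (Smx i *m x) -> tree r (Smx i *m x).

Lemma tree_cases r x : tree r x -> x = r \/ exists i, Kp i x.
Proof. case; [by left | by move=> i y _ K; right; exists i]. Qed.

Lemma tree_L {r x} : Root r -> tree r x -> 0 < qL x.
Proof.
move=> [_ hr] /tree_cases [->//|[i K]]; exact: Kp_L K.
Qed.

Lemma tree_red {r x} : tree r x -> reduced x -> x = r.
Proof.
move=> /tree_cases [->//|[i K]] R; have := R i; by rewrite Kp_dec.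
Qed.

Lemma tree_S r x j : Root r -> tree r x -> tree r (Smx j *m x).
Proof.
move=> R; case.
- case: R => h1 h2; have := h1 j; rewrite le0r => /orP [/eqP h|h].
    by rewrite S_fix //; exact: tr0.
  by apply: trS; [exact: tr0 | exact: Root_prop].
- move=> i y ty K; have [ji|ji] := eqVneq j i.
    by subst j; rewrite SS.
  by apply: trS; [exact: trS | exact: Kp_prop K ji].
Qed.

Lemma inA_tree r U : Root r -> in_A U ->
  [/\ U \in unitmx, (forall x, tree r x -> tree r (U *m x))
                  & (forall x, tree r x -> tree r (invmx U *m x))].
Proof.
move=> R; elim.
- move=> i; have [u _] := mulmx1_unit (SmxSmx i).
  have E : invmx (Smx i) = Smx i.
    by rewrite -[LHS]mulmx1 -(SmxSmx i) mulmxA mulVmx // mul1mx.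
  by split => // x tx; rewrite ?E; exact: tree_S.
- by split; [exact: unitmx1 | move=> x; rewrite mul1mx | move=> x; rewrite invmx1 mul1mx].
- move=> U1 V1 _ [uU hU hU'] _ [uV hV hV']; split.
  + by rewrite unitmx_mul uU uV.
  + by move=> x tx; rewrite -mulmxA; apply: hU; apply: hV.
  + have uUV : U1 *m V1 \in unitmx by rewrite unitmx_mul uU uV.
    have E : invmx (U1 *m V1) = invmx V1 *m invmx U1.
      have H1 : (U1 *m V1) *m (invmx V1 *m invmx U1) = 1%:M.
        by rewrite -mulmxA (mulmxA V1) mulmxV // mul1mx mulmxV.
      by rewrite -[LHS]mulmx1 -H1 mulmxA mulVmx // mul1mx.
    move=> x tx; rewrite E -mulmxA; apply: hV'; exact: hU'.
- move=> U1 _ [uU hU hU']; split.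
  + by rewrite unitmx_inv.
  + exact: hU'.
  + by rewrite invmxK.
Qed.

Lemma orbit_tree {v r x} : Root r -> in_Aorbit v r -> in_Aorbit v x -> tree r x.
Proof.
move=> R [U0 [hU0 Er]] [W [hW ->]].
have [u0 _ h0'] := inA_tree _ U0 R hU0.
have [_ hW1 _] := inA_tree _ W R hW.
have -> : W *m v = W *m (invmx U0 *m r) by rewrite Er mulKmx.
apply: hW1; apply: h0'; exact: tr0.
Qed.

Definition Pm (p : 'S_4) (y x : quad) := forall m, y m 0 = x (p m) 0.

Lemma Pm_sum (p : 'S_4) (f g : 'I_4 -> int) : (forall m, f m = g (p m)) ->
  \sum_m f m = \sum_m g m.
Proof.
move=> h; rewrite [RHS](reindex_inj (@perm_inj _ p)); exact: eq_bigr.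
Qed.

Lemma Pm_qL {p y x} : Pm p y x -> qL y = qL x.
Proof. move=> h; apply: (@Pm_sum p) => m; exact: h. Qed.

Lemma Pm_qnorm {p y x} : Pm p y x -> qnorm y = qnorm x.
Proof. move=> h; apply: (@Pm_sum p) => m /=; by rewrite h. Qed.

Lemma Pm_tq {p y x} m : Pm p y x -> tq y m = tq x (p m).
Proof. by move=> h; rewrite /tq (Pm_qL h) h. Qed.

Lemma Pm_S {p y x} j : Pm p y x -> Pm p (Smx j *m y) (Smx (p j) *m x).
Proof.
move=> h m; rewrite !SmxE (inj_eq perm_inj).
by case: ifP => [/eqoP kj|_]; [subst m; rewrite (Pm_tq _ h) h | rewrite h].
Qed.

Lemma Pm_dec {p y x} j : Pm p y x -> decreases y j = decreases x (p j).
Proof.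
move=> h; rewrite /decreases (Pm_qnorm h) (Pm_qnorm (Pm_S j h)) //.
Qed.

Lemma Pm_red {p y x} : Pm p y x -> reduced x -> reduced y.
Proof. by move=> h R j; rewrite (Pm_dec _ h). Qed.

Lemma Pm_Kp {p y x j} : Pm p y x -> Kp (p j) x -> Kp j y.
Proof.
move=> h [h1 h2 h3]; split; rewrite ?(Pm_tq _ h) ?(Pm_qL h) //.
move=> k kj; rewrite !(Pm_tq _ h); apply: h2; by rewrite (inj_eq perm_inj).
Qed.

Lemma Pm_inv {p y x} : Pm p y x -> Pm p^-1 x y.
Proof. by move=> h m; rewrite h permKV. Qed.

Lemma Pm_Root {p y x} : Pm p y x -> Root x -> Root y.
Proof.
move=> h [h1 h2]; split; last by rewrite (Pm_qL h).
by move=> k; rewrite (Pm_tq _ h).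
Qed.

Lemma Pm_comp {p q w y x} : Pm p w y -> Pm q y x -> Pm (p * q)%g w x.
Proof. by move=> h1 h2 m; rewrite h1 h2 permM. Qed.

Lemma Pm_opp {p y x} : Pm p y x -> Pm p (- y) (- x).
Proof. by move=> h m; rewrite !mxE h. Qed.

Definition sq (x : quad) := [seq x j 0 | j <- enum 'I_4].

Lemma sortqE x m : sortq x m 0 = nth 0 (sort <=%R (sq x)) m.
Proof. by rewrite mxE. Qed.

Lemma sortq_Pm {p y x} : Pm p y x -> sortq y = sortq x.
Proof.
move=> h; rewrite /sortq.
suff -> : sort <=%R [seq y j 0 | j <- enum 'I_4] = sort <=%R [seq x j 0 | j <- enum 'I_4] by [].
apply/perm_sort_leP.
have -> : [seq y j 0 | j <- enum 'I_4] = [seq x j 0 | j <- [seq p j | j <- enum 'I_4]].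
  by elim: (enum _) => [|a l IH] //=; rewrite IH h.
apply: perm_map; apply: uniq_perm.
- by rewrite map_inj_uniq ?enum_uniq //; exact: perm_inj.
- exact: enum_uniq.
- move=> z; rewrite mem_enum; apply/mapP; exists (p^-1 z)%g; by rewrite ?mem_enum ?permKV.
Qed.

Lemma sortq_perm x : exists p : 'S_4, Pm p (sortq x) x.
Proof.
set t := [tuple x j 0 | j < 4].
have st : sq x = t by rewrite /t /sq /mktuple /=.
have : perm_eq (sort <=%R (sq x)) t by rewrite -st perm_sort.
case/tuple_permP => p hp; exists p => m.
by rewrite sortqE hp nth_mktuple tnth_mktuple.
Qed.

Lemma sortq_le x j : sortq x j 0 <= sortq x i3 0.
Proof.
rewrite !sortqE.
have so : sorted <=%R (sort <=%R (sq x)) by apply: sort_sorted; exact: le_total.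
apply: (sorted_leq_nth le_trans lexx 0 so); rewrite ?inE /= ?size_sort /sq ?size_map ?size_enum_ord //.
- by rewrite -enumT size_enum_ord ltn_ord.
- by rewrite -enumT size_enum_ord.
- by rewrite -ltnS ltn_ord.
Qed.

Lemma sum4 (f : 'I_4 -> int) : \sum_i f i = f i0 + f i1 + f i2 + f i3.
Proof. rewrite !big_ord_recl big_ord0 addr0 !addrA. congr (_ + _ + _ + _); congr f; apply: val_inj => //. Qed.

Lemma enum4 : enum 'I_4 = [:: i0; i1; i2; i3].
Proof. by apply: (inj_map val_inj); rewrite val_enum_ord. Qed.

Lemma root_pos_Root {x} : root_pos x -> Root x.
Proof.
case=> _ [_ [h1 h2]].
have [p hp] := sortq_perm x.
apply: (Pm_Root (Pm_inv hp)).
have hL : qL (sortq x) = sortq x i0 0 + sortq x i1 0 + sortq x i2 0 + sortq x i3 0.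
  by rewrite /qL sum4.
split; last by rewrite hL; lia.
move=> k; rewrite /tq hL; have := sortq_le x k.
have := sortq_le x i0; have := sortq_le x i1; have := sortq_le x i2.
case: k => [[|[|[|[|k]]]] hk] //=;
  try (have -> : Ordinal hk = i0 by apply: val_inj);
  try (have -> : Ordinal hk = i1 by apply: val_inj);
  try (have -> : Ordinal hk = i2 by apply: val_inj);
  try (have -> : Ordinal hk = i3 by apply: val_inj); lia.
Qed.

Lemma neg_root {a} : qL a < 0 -> is_root a -> reduced a /\ Root (- a).
Proof.
move=> hL; rewrite /is_root; case: ifP => [h|_]; first by move: h; lia.
case=> ra rq; split => //.
have Rq := root_pos_Root rq.
set w := sortq a in Rq.
set q := quad_of _ _ _ _ in Rq.
pose rho := perm (@rev_ord_inj 4).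
have Pq : Pm rho q (- w).
  move=> m; rewrite permE !mxE.
  case: m => [[|[|[|[|m]]]] hm] //=; congr (- w _ 0); by apply: val_inj.
have Rw : Root (- w) := Pm_Root (Pm_inv Pq) Rq.
have [p hp] := sortq_perm a.
exact: (Pm_Root (Pm_inv (Pm_opp hp)) Rw).
Qed.

Lemma red_step_None y : (forall k, ~~ decreases (sortq y) k) -> red_step y = None.
Proof.
move=> h; rewrite /red_step /= enum4 /=.
by rewrite !(negbTE (h _)).
Qed.

Lemma red_step_Some y : decreases (sortq y) i3 ->
  (forall k, k != i3 -> ~~ decreases (sortq y) k) ->
  red_step y = Some (i3, Smx i3 *m sortq y).
Proof.
move=> h3 h; rewrite /red_step /= enum4 /=.
rewrite (negbTE (h i0 isT)) (negbTE (h i1 isT)) (negbTE (h i2 isT)) h3 /=.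
by have -> : inord 3 = i3 by apply: val_inj; rewrite /= inordK.
Qed.

Lemma run {r x} : Root r -> tree r x -> forall y (p : 'S_4), Pm p y x ->
  exists s, red_run y s (sortq r) /\ all (pred1 i3) s.
Proof.
move=> R; elim => [|i x' tx IH K] y p hp.
- exists [::]; split => //.
  have [q hq] := sortq_perm y.
  have hw := Pm_comp hq hp.
  rewrite -(sortq_Pm hp); apply: red_halt; apply: red_step_None => k.
  by rewrite (Pm_dec _ hw); exact: Root_ndec.
- have [q hq] := sortq_perm y.
  have hw := Pm_comp hq hp.
  set tau := (q * p)%g in hw.
  have K' : Kp (tau^-1 i)%g (sortq y).
    by apply: (Pm_Kp hw); rewrite permKV.
  have ej : (tau^-1 i)%g = i3.
    apply/eqP/negPn/negP => ne.
    have ne2 : i3 != (tau^-1 i)%g by rewrite eq_sym.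
    have := Kp_pos K' ne2; case: K' => h1 _ _.
    have := sortq_le y (tau^-1 i)%g; move: h1; rewrite /tq; lia.
  rewrite ej in K'.
  have [s [rs als]] : exists s, red_run (Smx i3 *m sortq y) s (sortq r) /\ all (pred1 i3) s.
    apply: (IH _ tau).
    have e3 : tau i3 = i by rewrite -ej permKV.
    have := Pm_S i3 hw; rewrite e3 SS; exact.
  exists (i3 :: s); split; last by rewrite /= ?eqxx ?als.
  apply: red_move rs; apply: red_step_Some; first exact: Kp_dec K'.
  by move=> k; exact: Kp_ndec K'.
Qed.

Lemma orbit_opp {v x} : in_Aorbit v x -> in_Aorbit (- v) (- x).
Proof. by case=> U [hU ->]; exists U; split => //; rewrite mulmxN. Qed.

Lemma qL_opp (x : quad) : qL (- x) = - qL x.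
Proof. rewrite /qL -sumrN; apply: eq_bigr => i _; by rewrite mxE. Qed.

Lemma qnorm_opp (x : quad) : qnorm (- x) = qnorm x.
Proof. rewrite /qnorm; apply: eq_bigr => i _; by rewrite mxE normrN. Qed.

Lemma red_opp {x : quad} : reduced x -> reduced (- x).
Proof. by move=> R j; rewrite /decreases mulmxN !qnorm_opp; exact: R. Qed.

Theorem theorem3p2 (v a : quad) :
  v != 0 -> in_Aorbit v a -> is_root a ->
  (* (1) a is the unique reduced quadruple in the orbit *)
  (reduced a /\ forall b : quad, in_Aorbit v b -> reduced b -> b = a) /\
  (* (2) all L(x) nonzero with a common sign *)
  ((forall x : quad, in_Aorbit v x -> 0 < qL x) \/
   (forall x : quad, in_Aorbit v x -> qL x < 0)) /\
  (* ... and if positive, the algorithm applies only S_4 and ends at the root *)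
  ((forall x : quad, in_Aorbit v x -> 0 < qL x) ->
   forall x : quad, in_Aorbit v x ->
     exists s : seq 'I_4, red_run x s (sortq a) /\ all (pred1 i3) s).
Proof.
move=> _ ha ra.
case: (lerP 0 (qL a)) => hL.
- have Ra : Root a by move: ra; rewrite /is_root hL => /root_pos_Root.
  split; first split.
  + by move=> j; exact: Root_ndec.
  + by move=> b hb rb; exact: tree_red (orbit_tree Ra ha hb) rb.
  split; first by left => x hx; exact: tree_L Ra (orbit_tree Ra ha hx).
  move=> _ x hx; apply: (run Ra (orbit_tree Ra ha hx) x 1%g).
  by move=> m; rewrite perm1.
- have [red Ra'] := neg_root hL ra.
  split; first split => //.
  + move=> b hb rb.
    have := tree_red (orbit_tree Ra' (orbit_opp ha) (orbit_opp hb)) (red_opp rb).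
    exact: oppr_inj.
  split.
  + right => x hx; have := tree_L Ra' (orbit_tree Ra' (orbit_opp ha) (orbit_opp hx)).
    rewrite qL_opp; lia.
  + by move=> H; have := H a ha; lia.
Qed.
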